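(* There is an absolute constant $C>0$ such that the following holds. Let $n\ge 1$ and let $T:\mathbb{C}\times S^1\to\mathbb{C}$ satisfy $\mathrm{Lip}(T_\theta-\mathrm{Id})<4^{-n}$ for every $\theta$. Let $P=(Q,Q')\in A_{j,k,T}$ for some integers $j,k$. Then $\rho_{P,T}:=\int_0^{2\pi}|\mathrm{Proj}_\theta(T_\theta(Q))\cap\mathrm{Proj}_\theta(T_\theta(Q'))|\,d\theta\le C\,4^{k-2n}$.
   Context: Middle-half Cantor set: $\mathcal{C}_0=[0,1]$ and $\mathcal{C}_{n+1}$ is obtained from $\mathcal{C}_n$ by replacing each of its intervals by the first and last quarters of that interval; $\mathcal{K}_n:=\mathcal{C}_n\times\mathcal{C}_n$ is the union of $4^n$ squares (''Cantor squares'') of side $4^{-n}$. $T_\theta(z):=T(z,e^{i\theta})$; $\mathrm{Proj}_\theta$ is orthogonal projection onto the line through the origin in direction $e^{i\theta}$ and $|\cdot|$ is one-dimensional Lebesgue measure. In the rotated coordinates $(x,y)$ whose positive $x$-axis makes angle $\arctan(1/2)$ with the standard $x$-axis, $A_{j,k,T}$ is the set of pairs $(Q,Q')$ of Cantor squares such that for some $\theta$ the images $T_\theta(q)=(x_1,y_1)$, $T_\theta(q')=(x_2,y_2)$ of their centers satisfy $4^{-k-1}\le|y_1-y_2|\le 4^{-k}$ and $4^{-j-1}\le\left|\frac{x_1-x_2}{y_1-y_2}\right|\le 4^{-j}$. *)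

(* Defs.v *)
(* R : realType, the plane C identified with R * R. *)
From HB Require Import structures.
From mathcomp Require Import all_boot all_order all_algebra.
From mathcomp Require Import all_classical all_reals all_analysis.
Set Implicit Arguments. Unset Strict Implicit. Unset Printing Implicit Defensive.
Import Order.TTheory GRing.Theory Num.Theory.
Local Open Scope classical_set_scope.
Local Open Scope ring_scope.

Section Defs.
Variable R : realType.

Definition pdist (p q : R * R) : R :=
  Num.sqrt ((p.1 - q.1) ^+ 2 + (p.2 - q.2) ^+ 2).

(* Lip(f) < c, i.e. some Lipschitz constant L < c (Lip(f) is the least one) *)
Definition lip_lt (f : R * R -> R * R) (c : R) : Prop :=
  exists L : R, L < c /\ forall z w, pdist (f z) (f w) <= L * pdist z w.

(* T_theta(z) := T(z, e^{i theta}); T : C x S^1 -> C, points of S^1 given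
   as (cos theta, sin theta) *)
Definition Tth (T : R * R -> R * R -> R * R) (th : R) (z : R * R) : R * R :=
  T z (cos th, sin th).

Definition Tth_minus_id (T : R * R -> R * R -> R * R) (th : R) (z : R * R)
  : R * R := ((Tth T th z).1 - z.1, (Tth T th z).2 - z.2).

(* Left endpoints of the 2^n intervals of C_n (each of length 4^-n):
   C_0 = [0,1]; each interval [b, b + 4^-n] of C_n is replaced by its first
   and last quarters [b, b + 4^-(n+1)] and [b + 3 4^-(n+1), b + 4^-n]. *)
Fixpoint cantor_left (n : nat) (a : R) : Prop :=
  match n with
  | 0%N => a = 0
  | m.+1 => exists b, cantor_left m b /\
            (a = b \/ a = b + 3 * (4 ^- m.+1))
  end.

Definition cantor_square (n : nat) (c : R * R) : set (R * R) :=
  [set p | c.1 <= p.1 <= c.1 + 4 ^- n /\ c.2 <= p.2 <= c.2 + 4 ^- n].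

Definition is_cantor_square_corner (n : nat) (c : R * R) : Prop :=
  cantor_left n c.1 /\ cantor_left n c.2.

Definition square_center (n : nat) (c : R * R) : R * R :=
  (c.1 + 4 ^- n / 2, c.2 + 4 ^- n / 2).

Definition rot_alpha : R := atan (2^-1).
Definition rotx (p : R * R) : R := p.1 * cos rot_alpha + p.2 * sin rot_alpha.
Definition roty (p : R * R) : R := - p.1 * sin rot_alpha + p.2 * cos rot_alpha.

Definition in_A (n : nat) (j k : int) (T : R * R -> R * R -> R * R)
  (c c' : R * R) : Prop :=
  is_cantor_square_corner n c /\ is_cantor_square_corner n c' /\
  exists th : R,
    let z1 := Tth T th (square_center n c) in
    let z2 := Tth T th (square_center n c') in
    let x1 := rotx z1 in let y1 := roty z1 in
    let x2 := rotx z2 in let y2 := roty z2 in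
    (4 : R) ^ (- k - 1) <= `|y1 - y2| <= (4 : R) ^ (- k) /\
    (4 : R) ^ (- j - 1) <= `|(x1 - x2) / (y1 - y2)| <= (4 : R) ^ (- j).

(* Proj_theta(A), the line through 0 in direction e^{i theta} identified
   isometrically with R via t |-> t e^{i theta} *)
Definition proj (th : R) (A : set (R * R)) : set R :=
  [set p.1 * cos th + p.2 * sin th | p in A].

Definition overlap (n : nat) (T : R * R -> R * R -> R * R) (c c' : R * R)
  (th : R) : \bar R :=
  (lebesgue_measure : set R -> \bar R)
    (proj th (Tth T th @` cantor_square n c) `&`
     proj th (Tth T th @` cantor_square n c')).

Definition rho (n : nat) (T : R * R -> R * R -> R * R) (c c' : R * R)
  : \bar R :=
  (\int[lebesgue_measure]_(th in `[0%R, (2 * pi)%R]) overlap n T c c' th)%E.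

End Defs.

(* Main.v *)
Require Import Defs.
From HB Require Import structures.
From mathcomp Require Import all_boot all_order all_algebra.
From mathcomp Require Import all_classical all_reals all_analysis.
Import Order.TTheory GRing.Theory Num.Theory.
Import numFieldTopology.Exports numFieldNormedType.Exports.
From mathcomp Require Import ring lra.
Local Open Scope ring_scope.

Section Helpers.
Local Open Scope classical_set_scope.
Variable R : realType.

Local Open Scope ereal_scope.
Lemma le_int_nm (D : set R) (f g : R -> \bar R) :
  (forall x, D x -> 0 <= f x) -> (forall x, D x -> f x <= g x) ->
  \int[lebesgue_measure]_(x in D) f x <= \int[lebesgue_measure]_(x in D) g x.
Proof.
move=> f0 fg.
have g0 : forall x, D x -> 0 <= g x by move=> x Dx; exact: le_trans (f0 x Dx) (fg x Dx).
rewrite (@ge0_integralE _ _ _ lebesgue_measure D f f0) (@ge0_integralE _ _ _ lebesgue_measure D g g0).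
apply: ereal_sup_le => _ [h hf <-]; exists h => //= x.
apply: le_trans (hf x) _; rewrite /patch; case: ifPn => // /set_mem Dx.
exact: fg.
Qed.
Lemma meas_itv (a b : R) : (a <= b)%R -> lebesgue_measure `[a, b] = (b - a)%:E.
Proof.
move=> ab; rewrite lebesgue_measure_itv /= lte_fin; case: ltP => // ba.
have -> : a = b by apply/le_anti; rewrite ab ba.
by rewrite subrr.
Qed.
Local Close Scope ereal_scope.
Lemma cos_pi4 : 1/2 <= cos (pi / 4 : R).
Proof.
have c0 : 0 < cos (pi / 4 : R).
  apply: cos_gt0_pihalf; have p0 := pi_gt0 R; apply/andP; split; lra.
have t1 := @tan_piquarter R; rewrite /tan in t1.
have sc : sin (pi / 4 : R) = cos (pi / 4).
  by rewrite -[LHS](divfK (lt0r_neq0 c0)) t1 mul1r.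
have := cos2Dsin2 (pi / 4 : R); rewrite sc => h.
nra.
Qed.
Lemma sin_pi4 : sin (pi / 4 : R) = cos (pi / 4).
Proof.
have c0 : 0 < cos (pi / 4 : R).
  apply: cos_gt0_pihalf; have p0 := pi_gt0 R; apply/andP; split; lra.
have t1 := @tan_piquarter R; rewrite /tan in t1.
by rewrite -[LHS](divfK (lt0r_neq0 c0)) t1 mul1r.
Qed.

Lemma sin_lb (t : R) : 0 <= t <= pi / 2 -> t <= 4 * sin t.
Proof.
move=> /andP[t0 tp]; have p0 := pi_gt0 R; have c4 := cos_pi4.
have p2 := @pihalf_lt2 R.
have [tle|tge] := leP t (pi / 4).
  have [|xi xin eq] := @MVT_segment R sin cos 0 t t0 (fun x _ => is_derive_sin x).
  - exact/continuous_subspaceT/continuous_sin.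
  rewrite sin0 subr0 subr0 in eq.
  move: xin; rewrite in_itv /= => /andP[x0 xt].
  have cx : cos (pi / 4) <= cos xi.
    have [xe|xl] := eqVneq xi (pi / 4); first by rewrite xe.
    apply/ltW; rewrite ltr_cos ?in_itv /=; try (apply/andP; split); try lra.
  rewrite eq; nra.
have : sin (pi / 4) < sin t.
  rewrite ltr_sin ?in_itv /=; try (apply/andP; split); lra.
rewrite sin_pi4; lra.
Qed.
Lemma sin_lb_abs (a : R) : `|a| <= pi / 2 -> `|a| <= 4 * `|sin a|.
Proof.
move=> ha; have p0 := pi_gt0 R.
have [a0|a0] := leP 0 a.
  rewrite ger0_norm // in ha *.
  have h1 : a <= 4 * sin a by apply: sin_lb; apply/andP; split.
  have := ler_norm (sin a); move=> h2; lra.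
rewrite ltr0_norm // in ha *.
have h1 : - a <= 4 * sin (- a) by apply: sin_lb; apply/andP; split; lra.
rewrite sinN in h1.
have := ler_norm (- sin a); rewrite normrN => h2; lra.
Qed.

Lemma cos_near (y : R) : 0 <= y <= pi -> `|y - pi / 2| <= 4 * `|cos y|.
Proof.
move=> /andP[y0 yp].
have -> : cos y = - sin (y - pi / 2) by rewrite -cosDpihalf subrK.
rewrite normrN; apply: sin_lb_abs.
have [h|h] := leP 0 (y - pi / 2).
  rewrite ger0_norm //; lra.
rewrite ltr0_norm //; lra.
Qed.

Lemma cos_cover (x d : R) : - pi <= x <= 3 * pi -> `|cos x| <= d ->
  [\/ `|x + pi / 2| <= 4 * d, `|x - pi / 2| <= 4 * d,
       `|x - 3 * pi / 2| <= 4 * d | `|x - 5 * pi / 2| <= 4 * d].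
Proof.
move=> /andP[x1 x2] cd; have p0 := pi_gt0 R.
have [xa|xa] := leP x 0.
  apply: Or41; have := @cos_near (x + pi).
  rewrite cosDpi normrN.
  have -> : x + pi - pi / 2 = x + pi / 2 by field.
  move=> h; have := h ltac:(apply/andP; split; lra); lra.
have [xb|xb] := leP x pi.
  apply: Or42; have := @cos_near x.
  move=> h; have := h ltac:(apply/andP; split; lra); lra.
have [xc|xc] := leP x (2 * pi).
  apply: Or43; have := @cos_near (x - pi).
  have -> : cos (x - pi) = - cos x by rewrite -[in RHS](subrK pi x) cosDpi opprK.
  rewrite normrN.
  have -> : x - pi - pi / 2 = x - 3 * pi / 2 by field.
  move=> h; have := h ltac:(apply/andP; split; lra); lra.
apply: Or44; have := @cos_near (x - 2 * pi).
have -> : cos (x - 2 * pi) = cos x.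
  by rewrite -[in RHS](subrK (2 * pi) x) mulr_natl cosD2pi.
have -> : x - 2 * pi - pi / 2 = x - 5 * pi / 2 by field.
move=> h; have := h ltac:(apply/andP; split; lra); lra.
Qed.
Lemma polar (u1 u2 : R) : u1 ^+ 2 + u2 ^+ 2 = 1 ->
  exists phi, - pi <= phi <= pi /\ cos phi = u1 /\ sin phi = u2.
Proof.
move=> h.
have hu : -1 <= u1 <= 1 by apply/andP; split; nra.
have hc : cos (acos u1) = u1 by apply: acosK; rewrite in_itv.
have hs : sin (acos u1) = `|u2|.
  by rewrite sin_acos // -sqrtr_sqr; congr Num.sqrt; lra.
have a0 := acos_ge0 hu; have a1 := acos_lepi hu.
have [u0|u0] := leP 0 u2.
  exists (acos u1); split; first by apply/andP; split; lra.
  by rewrite hs ger0_norm.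
exists (- acos u1); split; first by apply/andP; split; lra.
by rewrite cosN sinN hs ltr0_norm ?opprK.
Qed.

Lemma cs2 (a b x y : R) : a ^+ 2 + b ^+ 2 = 1 ->
  `|x * a + y * b| <= Num.sqrt (x ^+ 2 + y ^+ 2).
Proof.
move=> h; rewrite -sqrtr_sqr; apply: ler_wsqrtr.
have : 0 <= (x * b - y * a) ^+ 2 by apply: sqr_ge0.
have -> : x ^+ 2 + y ^+ 2 = (x ^+ 2 + y ^+ 2) * (a ^+ 2 + b ^+ 2) by rewrite h mulr1.
move=> H; nra.
Qed.
Lemma sqrt_le_sum (x y : R) : Num.sqrt (x ^+ 2 + y ^+ 2) <= `|x| + `|y|.
Proof.
rewrite -(ger0_norm (addr_ge0 (normr_ge0 x) (normr_ge0 y))) -sqrtr_sqr.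
apply: ler_wsqrtr.
have h1 : x ^+ 2 = `|x| ^+ 2 by rewrite real_normK ?num_real.
have h2 : y ^+ 2 = `|y| ^+ 2 by rewrite real_normK ?num_real.
rewrite h1 h2; have := normr_ge0 x; have := normr_ge0 y; move=> *; nra.
Qed.
Lemma pdist_ge0 (p q : R * R) : 0 <= pdist p q.
Proof. exact: sqrtr_ge0. Qed.
Lemma dir_bound (T : R * R -> R * R -> R * R) th s a b z w :
  lip_lt (Tth_minus_id T th) s -> a ^+ 2 + b ^+ 2 = 1 ->
  `|((Tth T th z).1 - (Tth T th w).1) * a + ((Tth T th z).2 - (Tth T th w).2) * b
    - ((z.1 - w.1) * a + (z.2 - w.2) * b)| <= s * pdist z w.
Proof.
move=> [L [Ls HL]] hab.
have := @cs2 a b ((Tth_minus_id T th z).1 - (Tth_minus_id T th w).1)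
            ((Tth_minus_id T th z).2 - (Tth_minus_id T th w).2) hab.
rewrite /Tth_minus_id /= => h1.
have h2 := HL z w; rewrite /pdist /Tth_minus_id /= in h2.
have h3 : L * pdist z w <= s * pdist z w.
  by apply: ler_wpM2r; [exact: pdist_ge0 | exact: ltW].
rewrite /pdist in h3.
set E := (X in `|X|); set E' := (X in `|X|) in h1.
have -> : E = E' by rewrite /E /E'; ring.
by apply: (le_trans h1); apply: (le_trans h2).
Qed.
Lemma cantor_bound n a : cantor_left n a -> 0 <= a /\ a + 4 ^- n <= 1 :> R.
Proof.
elim: n a => [|m IH] a /=.
  by move=> ->; rewrite expr0 invr1 add0r; split.
move=> [b [/IH [b0 b1] [->|->]]].
  split => //; apply: le_trans b1; rewrite lerD2l lef_pV2 ?posrE ?exprn_gt0 //.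
  by rewrite exprS ler_peMl ?exprn_ge0 // ler1n.
have e : ((4 : R) ^+ m)^-1 = 4 * (4 ^+ m.+1)^-1.
  by rewrite exprS invfM mulrA mulfV ?mul1r.
have h : 0 < ((4:R) ^+ m.+1)^-1 by rewrite invr_gt0 exprn_gt0.
move: b1 h; rewrite e; set y := (_ ^+ _)^-1 => b1 h.
split; lra.
Qed.

Lemma sq_close n c p : cantor_square n c p ->
  pdist p (square_center n c) <= 4 ^- n :> R.
Proof.
rewrite /cantor_square /square_center /pdist /= => -[/andP[h1 h2] /andP[h3 h4]].
apply: le_trans (sqrt_le_sum _ _) _.
set s := (4 : R) ^- n in h2 h4 *.
have e1 : `|p.1 - (c.1 + s / 2)| <= s / 2 by rewrite ler_norml; apply/andP; split; lra.
have e2 : `|p.2 - (c.2 + s / 2)| <= s / 2 by rewrite ler_norml; apply/andP; split; lra.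
lra.
Qed.

Lemma norm_tri (E F : R) : `|E| <= `|E - F| + `|F|.
Proof. by rewrite -{1}(subrK F E) ler_normD. Qed.

Lemma proj_close n (T : R * R -> R * R -> R * R) th c t :
  lip_lt (Tth_minus_id T th) (4 ^- n) -> (4 : R) ^- n <= 1 ->
  Defs.proj th (Tth T th @` cantor_square n c) t ->
  `|t - ((Tth T th (square_center n c)).1 * cos th
         + (Tth T th (square_center n c)).2 * sin th)| <= 2 * 4 ^- n.
Proof.
move=> hL s1 [_ [p hp <-] <-].
set q := square_center n c.
have h1 := @dir_bound T th _ (cos th) (sin th) p q hL (cos2Dsin2 th).
have h2 := @cs2 (cos th) (sin th) (p.1 - q.1) (p.2 - q.2) (cos2Dsin2 th).
have h3 := @sq_close n c p hp; rewrite -/q in h3.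
have h0 : 0 <= (4 : R) ^- n by rewrite invr_ge0 exprn_ge0.
have h4 : 4 ^- n * pdist p q <= 4 ^- n * 4 ^- n :> R by apply: ler_wpM2l.
rewrite /pdist in h3 h4 h1.
set E := (X in `|X| <= 2 * _).
set F := (_ * cos th + _ * sin th) in h2.
have := norm_tri E F.
have -> : E - F = ((Tth T th p).1 - (Tth T th q).1) * cos th +
    ((Tth T th p).2 - (Tth T th q).2) * sin th - F by rewrite /E; ring.
move: h1 h2 h3 h4; rewrite -/F.
set d := Num.sqrt _; set e1 := `|_ - F|; set e2 := `|F|.
move=> h1 h2 h3 h4 h5.
have h6 : 4 ^- n * 4 ^- n <= 4 ^- n :> R by rewrite ler_piMl.
move: h0 h1 h3 h4 h6 s1; set s := (4 : R) ^- n => h0 h1 h3 h4 h6 s1; lra.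
Qed.

End Helpers.
Arguments le_int_nm {R}.
Arguments meas_itv {R}.
Arguments cos_cover {R}.
Arguments polar {R u1 u2}.
Arguments cs2 {R}.
Arguments sqrt_le_sum {R}.
Arguments pdist_ge0 {R}.
Arguments dir_bound {R}.
Arguments cantor_bound {R n a}.
Arguments sq_close {R n c p}.
Arguments norm_tri {R}.
Arguments proj_close {R}.

Theorem lemma5 (R : realType) :
  exists C : R, 0 < C /\
  forall (n : nat) (T : R * R -> R * R -> R * R) (j k : int) (c c' : R * R),
    (1 <= n)%N ->
    (forall th : R, lip_lt (Tth_minus_id T th) (4 ^- n)) ->
    in_A n j k T c c' ->
    (rho n T c c' <= (C * (4 : R) ^ (k - 2 * (n : int)))%:E)%E.
Proof.
exists 6144; split; first lra.
move=> n T j k c c' hn hL [[cc1 cc2] [[cc'1 cc'2] [th0 hA]]].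
move: hA => /= [/andP[hy1 hy2] hx].
set s := (4 : R) ^- n.
have s0 : 0 < s by rewrite invr_gt0 exprn_gt0.
have s1 : s <= 1 by rewrite /s invf_le1 ?exprn_gt0 //; apply: exprn_ege1; rewrite ler1n.
set q := square_center n c; set q' := square_center n c'.
set v1 := q.1 - q'.1; set v2 := q.2 - q'.2.
set d := pdist q q'.
have d0 : 0 <= d := pdist_ge0 q q'.
have D1 : d <= 2.
  have [a0 a1] := cantor_bound cc1; have [b0 b1] := cantor_bound cc2.
  have [a0' a1'] := cantor_bound cc'1; have [b0' b1'] := cantor_bound cc'2.
  rewrite -/s in a1 b1 a1' b1'.
  have e1 : `|v1| <= 1.
    rewrite /v1 /q /q' /square_center /= ler_norml; apply/andP; split; lra.
  have e2 : `|v2| <= 1.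
    rewrite /v2 /q /q' /square_center /= ler_norml; apply/andP; split; lra.
  have := sqrt_le_sum v1 v2; rewrite -/(pdist q q') -/d; lra.
have D2 : (4 : R) ^ (- k - 1) <= 2 * d.
  have hab : (- sin (rot_alpha R)) ^+ 2 + cos (rot_alpha R) ^+ 2 = 1 :> R.
    by rewrite sqrrN addrC cos2Dsin2.
  have h1 := @dir_bound R T th0 _ _ _ q q' (hL th0) hab.
  have h2 := @cs2 R _ _ v1 v2 hab.
  rewrite -/(pdist q q') -/d in h2; rewrite -/s -/d in h1.
  have eX : roty (Tth T th0 q) - roty (Tth T th0 q') =
     (((Tth T th0 q).1 - (Tth T th0 q').1) * - sin (rot_alpha R) +
      ((Tth T th0 q).2 - (Tth T th0 q').2) * cos (rot_alpha R) -
      ((q.1 - q'.1) * - sin (rot_alpha R) + (q.2 - q'.2) * cos (rot_alpha R)))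
     + (v1 * - sin (rot_alpha R) + v2 * cos (rot_alpha R)).
    by rewrite /roty /v1 /v2; ring.
  move: hy1; rewrite -/q -/q' eX => hy1.
  have h4 : s * d <= d by rewrite ler_piMl.
  have := ler_normD
     (((Tth T th0 q).1 - (Tth T th0 q').1) * - sin (rot_alpha R) +
      ((Tth T th0 q).2 - (Tth T th0 q').2) * cos (rot_alpha R) -
      ((q.1 - q'.1) * - sin (rot_alpha R) + (q.2 - q'.2) * cos (rot_alpha R)))
     (v1 * - sin (rot_alpha R) + v2 * cos (rot_alpha R)).
  lra.
have dpos : 0 < d.
  have h4 : (0 : R) < 4 by lra.
  have := @exprz_gt0 R (- k - 1) 4 h4; lra.
set del := (4 * s + s * d) / d.
have dn0 : d != 0 by exact: lt0r_neq0.
have hu : (v1 / d) ^+ 2 + (v2 / d) ^+ 2 = 1.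
  have dd : d ^+ 2 = v1 ^+ 2 + v2 ^+ 2.
    by rewrite /d /pdist sqr_sqrtr // addr_ge0 ?sqr_ge0.
  by rewrite !expr_div_n -mulrDl -dd mulfV // expf_neq0.
have [phi [hphi [cphi sphi]]] := polar hu.
pose S : set R := ((`[phi - pi / 2 - 4 * del, phi - pi / 2 + 4 * del] `|`
                  `[phi + pi / 2 - 4 * del, phi + pi / 2 + 4 * del]) `|`
                 (`[phi + 3 * pi / 2 - 4 * del, phi + 3 * pi / 2 + 4 * del] `|`
                  `[phi + 5 * pi / 2 - 4 * del, phi + 5 * pi / 2 + 4 * del]))%classic.
have p0 := pi_gt0 R.
have inS : forall th, 0 <= th <= 2 * pi ->
    `|v1 * cos th + v2 * sin th| <= 4 * s + s * d -> S th.
  move=> th /andP[t0 t1] h.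
  have e : v1 * cos th + v2 * sin th = d * cos (th - phi).
    by rewrite cosB cphi sphi; field.
  rewrite e normrM (ger0_norm d0) in h.
  have hc : `|cos (th - phi)| <= del by rewrite /del ler_pdivlMr // mulrC.
  move: hphi => /andP[ph1 ph2].
  have hr : - pi <= th - phi <= 3 * pi by apply/andP; split; lra.
  case: (cos_cover (th - phi) del hr hc) => H; rewrite /S /=;
    [left; left| left; right | right; left | right; right];
    rewrite in_itv /=; move: H; rewrite ler_norml => /andP[H1 H2];
    apply/andP; split; lra.
have hpt : forall th, (`[0, 2 * pi])%classic th ->
    (overlap n T c c' th <= ((4 * s) * \1_S th)%:E)%E.
  move=> th Dth.
  set A := Defs.proj th (Tth T th @` cantor_square n c)%classic.
  set B := Defs.proj th (Tth T th @` cantor_square n c')%classic.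
  set a := (Tth T th q).1 * cos th + (Tth T th q).2 * sin th.
  set a' := (Tth T th q').1 * cos th + (Tth T th q').2 * sin th.
  have hA' : forall t, A t -> `|t - a| <= 2 * s :=
    fun t ht => proj_close n T th c t (hL th) s1 ht.
  have hB' : forall t, B t -> `|t - a'| <= 2 * s :=
    fun t ht => proj_close n T th c' t (hL th) s1 ht.
  rewrite /overlap -/A -/B indicE.
  have [thS|thS] := boolP (th \in S).
    rewrite mulr1.
    have sub : (A `&` B `<=` `[a - 2 * s, a + 2 * s])%classic.
      move=> t [/hA' h _]; rewrite /= in_itv /=.
      by move: h; rewrite ler_norml => /andP[h1 h2]; apply/andP; split; lra.
    apply: (@le_trans _ _ (lebesgue_measure (`[a - 2 * s, a + 2 * s])%classic)).
      by apply: le_outer_measure.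
    by rewrite meas_itv ?lee_fin; lra.
  rewrite mulr0.
  have -> : (A `&` B)%classic = set0.
    apply/seteqP; split => t // [ht1 ht2]; exfalso; move/negP: thS; apply.
    rewrite inE; apply: inS.
      by move: Dth; rewrite /= in_itv.
    have h1 := hA' t ht1; have h2 := hB' t ht2.
    have h3 := @dir_bound R T th _ _ _ q q' (hL th) (cos2Dsin2 th).
    rewrite -/s -/d in h3.
    have e : ((Tth T th q).1 - (Tth T th q').1) * cos th +
      ((Tth T th q).2 - (Tth T th q').2) * sin th -
      ((q.1 - q'.1) * cos th + (q.2 - q'.2) * sin th) =
      (t - a') - (t - a) - (v1 * cos th + v2 * sin th) by rewrite /a /a' /v1 /v2; ring.
    rewrite e in h3.
    have := norm_tri (v1 * cos th + v2 * sin th) (t - a' - (t - a)).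
    have := ler_normB (t - a') (t - a).
    have -> : v1 * cos th + v2 * sin th - (t - a' - (t - a)) =
       - (t - a' - (t - a) - (v1 * cos th + v2 * sin th)) by ring.
    rewrite normrN; lra.
  by rewrite measure0.
have mD : measurable (`[0, 2 * pi] : set R)%classic by exact: measurable_itv.
have mS : measurable S.
  by apply: measurableU; apply: measurableU; exact: measurable_itv.
have del0 : 0 <= del.
  rewrite /del divr_ge0 //; apply: addr_ge0; apply: mulr_ge0; lra.
rewrite /rho.
apply: le_trans.
  apply: (le_int_nm _ _ _ _ hpt) => th _; exact: measure_ge0.
rewrite (@integralZl_indic _ _ R lebesgue_measure _ mD (fun _ => S) (4 * s)) //; last by move=> h; exfalso; lra.
rewrite integral_indic //.
have hS : (lebesgue_measure (S `&` `[0%R, (2 * pi)%R])%classic <= (32 * del)%:E)%E.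
  apply: le_trans; first by apply: le_outer_measure; exact: subIsetl.
  have hU : forall A B : set R, (lebesgue_measure (A `|` B)%classic <=
      lebesgue_measure A + lebesgue_measure B)%E.
    by move=> A0 B0; exact: outer_measureU2.
  have hI : forall x, lebesgue_measure (`[x - 4 * del, x + 4 * del])%classic = (8 * del)%:E.
    by move=> x; rewrite meas_itv; [congr (_%:E); lra | lra].
  apply: le_trans; first exact: hU.
  apply: le_trans; first exact: leeD (hU _ _) (hU _ _).
  by rewrite !hI -!EFinD lee_fin; lra.
apply: le_trans.
  by apply: (lee_wpmul2l _ hS); rewrite lee_fin; lra.
rewrite -EFinM lee_fin.
have h4 : (4 : R) != 0 by rewrite pnatr_eq0.
have eK : (4 : R) ^ (k - 2 * (n : int)) = 4 ^ k * (s * s).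
  have -> : k - 2 * (n : int) = k + (- (n : int) + - (n : int)) by ring.
  by rewrite !expfzDr // /s exprnN.
have eK2 : (4 : R) ^ (- k - 1) = (4 ^ k)^-1 * 4^-1.
  by rewrite expfzDr // invr_expz exprN1.
rewrite eK; rewrite eK2 in D2.
have X0 : (0 : R) < 4 ^ k by apply: exprz_gt0; lra.
move: D2 X0; set X := (4 : R) ^ k => D2 X0.
have h1 : 1 <= 8 * d * X.
  have e : X^-1 / 4 * (4 * X) = 1 by field; rewrite lt0r_neq0.
  have := ler_wpM2r (ltW (mulr_gt0 (ltr0n R 4) X0)) D2.
  rewrite e => h; have -> : 8 * d * X = 2 * d * (4 * X) by ring.
  exact: h.
have hdel : del <= 48 * s * X.
  rewrite /del mulrDl mulfK //.
  have hd : d^-1 <= 8 * X.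
    rewrite -(@ler_pM2l _ d) // mulfV //; lra.
  have : 4 * s / d <= 4 * s * (8 * X) by rewrite ler_pM2l //; lra.
  have h2 : 8 * d * X <= 16 * X.
    have -> : 16 * X = 8 * 2 * X by ring.
    apply: ler_wpM2r; first lra.
    by apply: ler_wpM2l; lra.
  have : s <= s * (16 * X).
    rewrite -{1}(mulr1 s); apply: ler_wpM2l; lra.
  lra.
have -> : 6144 * (X * (s * s)) = 4 * s * (32 * (48 * s * X)) by ring.
apply: ler_wpM2l; first lra.
by apply: ler_wpM2l; lra.
Qed.
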